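(* Let $A,B\in\mathbb{R}^{m\times n}$ and $b\in\mathbb{R}^m$ with $\operatorname{rank}(A) = m$ and $m<n$, and let $1\le p\le\infty$. If $A^\dagger b\geq 0$, $A^\dagger B\geq0$ and $\|A^\dagger B\|_p<1$, then the equation $Ax-B|x|=b$ has at least one nonnegative solution.
   Context: $A^\dagger$ is the Moore–Penrose inverse; $|x|$ is the entrywise absolute value; vector/matrix inequalities are entrywise; $\|\cdot\|_p$ on matrices is the operator norm induced by the vector $p$-norm. *)

(* Defs.v *)
From HB Require Import structures.
From mathcomp Require Import all_boot all_order all_algebra.
From mathcomp Require Import all_classical all_reals all_analysis.
Set Implicit Arguments. Unset Strict Implicit. Unset Printing Implicit Defensive.
Import Order.TTheory GRing.Theory Num.Theory.
Local Open Scope ring_scope.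
Local Open Scope classical_set_scope.

(* The four Penrose conditions (real matrices: transpose = adjoint). *)
Definition penrose (R : realType) (m n : nat) (A : 'M[R]_(m, n)) (X : 'M[R]_(n, m)) : Prop :=
  [/\ A *m X *m A = A, X *m A *m X = X,
      (A *m X)^T = A *m X & (X *m A)^T = X *m A].

Definition mpinv (R : realType) (m n : nat) (A : 'M[R]_(m, n)) : 'M[R]_(n, m) :=
  xget 0 [set X | penrose A X].

Definition absmx (R : realType) (m n : nat) (M : 'M[R]_(m, n)) : 'M[R]_(m, n) :=
  map_mx (fun x => `|x|) M.
Definition nonneg_mx (R : realType) (m n : nat) (M : 'M[R]_(m, n)) : Prop :=
  forall i j, 0 <= M i j.

Definition vnorm (R : realType) (n : nat) (p : \bar R) (x : 'cV[R]_n) : R :=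
  match p with
  | EFin r => (\sum_(i < n) `|x i 0| `^ r) `^ r^-1
  | _ => \big[Num.max/0]_(i < n) `|x i 0|
  end.

Definition opnorm (R : realType) (n k : nat) (p : \bar R) (M : 'M[R]_(k, n)) : R :=
  sup [set vnorm p (M *m x) / vnorm p x | x in [set x : 'cV[R]_n | x != 0]].

(* Main.v *)
Require Import Defs.
From HB Require Import structures.
From mathcomp Require Import all_boot all_order all_algebra.
From mathcomp Require Import all_classical all_reals all_analysis.
Import Order.TTheory GRing.Theory Num.Theory.
Local Open Scope ring_scope.
Set Implicit Arguments. Unset Strict Implicit.

Section S.
Variable R : realType.

Definition mnorm k (x : 'cV[R]_k) : R := \big[Num.max/0]_(i < k) `|x i 0|.

Lemma mnorm_ge0 k (x : 'cV[R]_k) : 0 <= mnorm x.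
Proof. exact: bigmax_ge_id. Qed.

Lemma le_mnorm k (x : 'cV[R]_k) i : `|x i 0| <= mnorm x.
Proof. exact: le_bigmax. Qed.

Lemma mnorm_gt0 k (x : 'cV[R]_k) : x != 0 -> 0 < mnorm x.
Proof.
move=> xn0.
have [i Hi] : exists i, x i 0 != 0.
  apply/existsP; apply: contraNT xn0 => /existsPn H.
  apply/eqP/matrixP => i j; rewrite (ord1 j) mxE; exact/eqP/negPn/H.
by apply: lt_le_trans (le_mnorm x i); rewrite normr_gt0.
Qed.

Lemma vnorm_ge_m (p : \bar R) k (x : 'cV[R]_k) : (1 <= p)%E -> mnorm x <= vnorm p x.
Proof.
case: p => [r||] //= Hr.
rewrite lee_fin in Hr.
have r0 : 0 < r by apply: lt_le_trans Hr.
have r0' : 0 <= r by exact: ltW.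
have ri0 : 0 <= r^-1 by rewrite invr_ge0.
apply: bigmax_le; first exact: powR_ge0.
move=> i _.
have -> : `|x i 0| = (`|x i 0| `^ r) `^ r^-1.
  by rewrite -powRrM mulfV ?(gt_eqF r0) // powRr1.
apply: ge0_ler_powR => //; rewrite ?nnegrE ?powR_ge0 ?sumr_ge0 //.
rewrite (bigD1 i) //= lerDl sumr_ge0 // => j _; exact: powR_ge0.
Qed.

Lemma vnorm_le_m (p : \bar R) k (x : 'cV[R]_k) : (1 <= p)%E ->
  vnorm p x <= k.+1%:R * mnorm x.
Proof.
case: p => [r||] //= Hr; last first.
  by apply: ler_peMl; [exact: mnorm_ge0 | rewrite ler1n].
rewrite lee_fin in Hr.
have r0 : 0 < r by apply: lt_le_trans Hr.
have r0' : 0 <= r by exact: ltW.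
have ri0 : 0 <= r^-1 by rewrite invr_ge0.
have M0 := mnorm_ge0 x.
have kM0 : 0 <= k.+1%:R * mnorm x by rewrite mulr_ge0.
have E : k.+1%:R * mnorm x = ((k.+1%:R * mnorm x) `^ r) `^ r^-1.
  by rewrite -powRrM mulfV ?(lt0r_neq0 r0) // powRr1.
rewrite [X in _ <= X]E.
apply: ge0_ler_powR => //; rewrite ?nnegrE ?powR_ge0 ?sumr_ge0 //.
apply: (@le_trans _ _ (\sum_(i < k) mnorm x `^ r)).
  apply: ler_sum => i _; apply: ge0_ler_powR => //; rewrite ?nnegrE //.
  exact: le_mnorm.
rewrite sumr_const card_ord -[_ *+ k]mulr_natl powRM //.
apply: ler_wpM2r; first exact: powR_ge0.
apply: (@le_trans _ _ (k.+1%:R)); first by rewrite ler_nat.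
rewrite -[X in X <= _](@powRr1 _ k.+1%:R) //.
by apply: ler_powR; rewrite // ler1n.
Qed.

Lemma vnorm_mono (p : \bar R) k (u w : 'cV[R]_k) : (1 <= p)%E ->
  (forall i, 0 <= u i 0 <= w i 0) -> vnorm p u <= vnorm p w.
Proof.
move=> + H; case: p => [r||] //= Hr; last first.
  apply: le_bigmax2 => i _; have /andP[a b] := H i.
  by rewrite !ger0_norm // (le_trans a b).
rewrite lee_fin in Hr.
have r0 : 0 < r by apply: lt_le_trans Hr.
have r0' : 0 <= r by exact: ltW.
have ri0 : 0 <= r^-1 by rewrite invr_ge0.
apply: ge0_ler_powR => //; rewrite ?nnegrE ?powR_ge0 ?sumr_ge0 //.
apply: ler_sum => i _; have /andP[a b] := H i.
apply: ge0_ler_powR => //; rewrite ?nnegrE //.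
by rewrite !ger0_norm // (le_trans a b).
Qed.

Definition sabs k n (C : 'M[R]_(k, n)) : R := \sum_i \sum_j `|C i j|.

Lemma sabs_ge0 k n (C : 'M[R]_(k, n)) : 0 <= sabs C.
Proof. by apply: sumr_ge0 => i _; apply: sumr_ge0. Qed.

Lemma mnorm_mul k n (C : 'M[R]_(k, n)) x : mnorm (C *m x) <= sabs C * mnorm x.
Proof.
apply: bigmax_le; first by rewrite mulr_ge0 ?sabs_ge0 ?mnorm_ge0.
move=> i _; rewrite mxE.
apply: (le_trans (ler_norm_sum _ _ _)).
apply: (@le_trans _ _ (\sum_j `|C i j| * mnorm x)).
  by apply: ler_sum => j _; rewrite normrM ler_wpM2l // le_mnorm.
rewrite -mulr_suml ler_wpM2r ?mnorm_ge0 //.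
rewrite /sabs (bigD1 i) //= lerDl sumr_ge0 // => l _; exact: sumr_ge0.
Qed.

Lemma vnorm_gt0 (p : \bar R) k (x : 'cV[R]_k) : (1 <= p)%E -> x != 0 -> 0 < vnorm p x.
Proof. by move=> Hp xn0; apply: lt_le_trans (mnorm_gt0 xn0) (vnorm_ge_m _ Hp). Qed.

Lemma opnorm_ub (p : \bar R) k n (C : 'M[R]_(k, n)) : (1 <= p)%E ->
  has_ubound [set vnorm p (C *m x) / vnorm p x | x in [set x : 'cV[R]_n | x != 0]].
Proof.
move=> Hp; exists (k.+1%:R * sabs C) => y [x /= xn0 <-].
rewrite ler_pdivrMr ?vnorm_gt0 //.
apply: (le_trans (vnorm_le_m _ Hp)).
rewrite -mulrA ler_wpM2l //.
apply: (le_trans (mnorm_mul _ _)).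
by rewrite ler_wpM2l ?sabs_ge0 ?vnorm_ge_m.
Qed.

Lemma opnorm_key (p : \bar R) n (C : 'M[R]_n) (u : 'cV[R]_n) : (1 <= p)%E ->
  u != 0 -> (forall i, 0 <= u i 0 <= (C *m u) i 0) -> 1 <= opnorm p C.
Proof.
move=> Hp un0 H.
apply: (@le_trans _ _ (vnorm p (C *m u) / vnorm p u)).
  rewrite ler_pdivlMr ?vnorm_gt0 // mul1r; apply: vnorm_mono => //.
apply: (ub_le_sup (opnorm_ub C Hp)).
by exists u.
Qed.

End S.

Section M.
Variable R : realType.

Lemma penrose_exists m n (A : 'M[R]_(m, n)) : \rank A = m -> exists X, penrose A X.
Proof.
move=> rA.
have fA : row_free A by rewrite /row_free rA.
set G := A *m A^T.
have uG : G \in unitmx.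
  rewrite -row_free_unit; apply: inj_row_free => v.
  rewrite /G mulmxA => H.
  have w0 : v *m A = 0.
    have E : v *m A *m (v *m A)^T = 0 by rewrite trmx_mul mulmxA H mul0mx.
    have E2 : \sum_j (v *m A) 0 j ^+ 2 = 0.
      have := congr1 (fun M : 'M[R]_(1, 1) => M 0 0) E; rewrite !mxE => E'.
      rewrite -[RHS]E'; apply: eq_bigr => j _; by rewrite expr2 !mxE.
    apply/rowP => j; rewrite [RHS]mxE.
    apply/eqP; rewrite -sqrf_eq0; apply/eqP.
    by apply: (psumr_eq0P _ E2) => // l _; exact: sqr_ge0.
  by apply/eqP; rewrite -(mulmx_free_eq0 _ fA) w0.
have GT : G^T = G by rewrite /G trmx_mul trmxK.
exists (A^T *m invmx G).
have AX : A *m (A^T *m invmx G) = 1%:M by rewrite mulmxA mulmxV.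
split.
- by rewrite AX mul1mx.
- by rewrite -mulmxA AX mulmx1.
- by rewrite AX trmx1.
- by rewrite !trmx_mul trmxK trmx_inv GT mulmxA.
Qed.

End M.
From mathcomp Require Import lra.
Unset Implicit Arguments.

Theorem corollary3p7 (R : realType) (m n : nat)
  (A B : 'M[R]_(m, n)) (b : 'cV[R]_m) (p : \bar R) :
  \rank A = m -> (m < n)%N -> (1 <= p)%E ->
  nonneg_mx (mpinv A *m b) -> nonneg_mx (mpinv A *m B) ->
  opnorm p (mpinv A *m B) < 1 ->
  exists x : 'cV[R]_n, nonneg_mx x /\ A *m x - B *m absmx x = b.
Proof.
move=> rA mn Hp Hb HB Hn.
have PX := @xgetPex _ 0 [set X | penrose A X] (penrose_exists rA).
rewrite -/(mpinv A) in PX.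
move: PX Hb HB Hn; set X := mpinv A => -[AXA _ _ _] Hb HB Hn.
have fA : row_free A by rewrite /row_free rA.
have AX1 : A *m X = 1%:M.
  apply/eqP; rewrite -subr_eq0 -(mulmx_free_eq0 _ fA) mulmxBl AXA mul1mx subrr //.
set C := X *m B in HB Hn *.
set c := X *m b in Hb *.
have HC : forall i j, 0 <= \sum_k X i k * B k j by move=> i j; have := HB i j; rewrite mxE.
have key : forall u : 'cV[R]_n, u != 0 -> (forall i, 0 <= u i 0 <= (C *m u) i 0) -> False.
  move=> u un0 H; have := opnorm_key Hp un0 H; rewrite leNgt Hn //.
have uI : (1%:M - C) \in unitmx.
  rewrite -unitmx_tr -row_free_unit; apply: inj_row_free => v Hv.
  have Hw : (1%:M - C) *m v^T = 0.
    by have := congr1 trmx Hv; rewrite trmx_mul trmxK trmx0.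
  have Ew : C *m v^T = v^T.
    by apply/eqP; rewrite eq_sym -subr_eq0 -[X in X - _]mul1mx -mulmxBl Hw.
  suff : v^T = 0 by move=> /(congr1 trmx); rewrite trmxK trmx0.
  move: Ew; move: (v^T) => w Ew.
  case: (eqVneq w 0) => // wn0; exfalso.
  apply: (key (absmx w)).
    apply: contraNneq wn0 => H; apply/eqP/matrixP => i j.
    have := congr1 (fun M : 'M[R]_(n, 1) => M i j) H; rewrite !mxE => /eqP.
    by rewrite normr_eq0 => /eqP.
  move=> i; rewrite mxE normr_ge0 /=.
  have -> : w i 0 = (C *m w) i 0 by rewrite Ew.
  rewrite !mxE; apply: (le_trans (ler_norm_sum _ _ _)).
  apply: ler_sum => j _; rewrite normrM ger0_norm ?mxE //; by have := HB i j; rewrite mxE.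
have [y Ey] : exists y : 'cV[R]_n, y = c + C *m y.
  exists (invmx (1%:M - C) *m c).
  have h : (1%:M - C) *m (invmx (1%:M - C) *m c) = c.
    by rewrite mulKVmx.
  rewrite mulmxBl mul1mx in h.
  by apply/eqP; rewrite -subr_eq h.
have yge : forall i, 0 <= y i 0.
  set u := map_mx (fun t => Num.max (- t) 0) y.
  case: (eqVneq u 0) => [u0|un0]; last first.
    exfalso; apply: (key u un0) => i.
    rewrite mxE le_max lexx orbT /=.
    rewrite ge_max; apply/andP; split; last first.
      by rewrite mxE; apply: sumr_ge0 => j _; rewrite mulr_ge0 ?HC // mxE le_max lexx orbT.
    apply: (@le_trans _ _ (- (C *m y) i 0)).
      have Eyi : y i 0 = c i 0 + (C *m y) i 0 by rewrite {1}Ey mxE.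
      have := Hb i 0; lra.
    rewrite !mxE -sumrN; apply: ler_sum => j _; rewrite mxE -mulrN ler_wpM2l ?HC //.
    by rewrite mxE le_max lexx.
  move=> i; have := congr1 (fun M : 'M[R]_(n, 1) => M i 0) u0; rewrite !mxE => h.
  have : - y i 0 <= 0 by rewrite -h le_max lexx.
  lra.
exists y; split.
  by move=> i j; rewrite (ord1 j).
have -> : absmx y = y.
  by apply/matrixP => i j; rewrite mxE (ord1 j) ger0_norm.
rewrite {1}Ey mulmxDr /c /C !mulmxA AX1 !mul1mx addrK //.
Qed.
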